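(* Let ${\tt G}$ be a digraph with a fixed total order on its vertices. The function $\sigma_{\rm e}$ defined on covering pairs of the path poset by \[\sigma_{\rm e}({\tt H},{\tt H}\cup e)=\begin{cases}t(e,{\tt H})+1&\text{if }t(e,{\tt H})>s(e,{\tt H}),\\ s(e,{\tt H})&\text{if }s(e,{\tt H})>t(e,{\tt H}),\end{cases}\pmod 2\] is a sign assignment on $P({\tt G})$.
   Context: A digraph ${\tt G}=(V,E)$ has finite $V$ and $E\subseteq(V\times V)\setminus\{(v,v)\}$; for $e=(v,w)$, $s(e)=v$, $t(e)=w$. A multipath is a spanning subgraph (all vertices, subset of edges) each of whose connected components (of the underlying undirected graph) is an isolated vertex or a simple directed path (edges $e_1,\dots,e_k$ with $t(e_i)=s(e_{i+1})$, no repeated vertex, not a cycle). The path poset $P({\tt G})$ is the set of multipaths ordered by inclusion of edge sets; ${\tt H}\prec{\tt H}'$ (covering) iff ${\tt H}'={\tt H}\cup e$ is obtained by adding one edge $e$. For a multipath ${\tt H}$, order its components $c_0<c_1<\dots<c_k$ by their minimal vertices and, for $e\notin E({\tt H})$, let $s(e,{\tt H})$ (resp. $t(e,{\tt H})$) be the index $i$ of the component $c_i$ containing $s(e)$ (resp. $t(e)$); when ${\tt H}\cup e$ is a multipath these indices differ. A sign assignment on a poset assigns $\epsilon_{x,y}\in\mathbb Z_2$ to each covering pair $x\prec y$ such that for each square $x\prec y,y'\prec z$ ($y\ne y'$), $\epsilon_{x,y}+\epsilon_{y,z}\equiv\epsilon_{x,y'}+\epsilon_{y',z}+1\pmod 2$.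 *)

(* Defs.v *)
From mathcomp Require Import all_boot all_order.
Set Implicit Arguments. Unset Strict Implicit. Unset Printing Implicit Defensive.
Import Order.TTheory.
Local Open Scope order_scope.

Section PathPoset.
Context {d : Order.disp_t} {V : finOrderType d}.

Definition loopless (E : {set V * V}) : Prop := forall v : V, (v, v) \notin E.

Definition uadj (H : {set V * V}) : rel V :=
  fun x y => ((x, y) \in H) || ((y, x) \in H).

Definition comp (H : {set V * V}) (v : V) : {set V} :=
  [set w | connect (uadj H) v w].

(* Multipath: spanning subgraph of E each of whose components is either an
   isolated vertex (p of size 1) or a simple directed path
   p_0 -> p_1 -> ... -> p_k (p uniq, the edges of H leaving the component
   are exactly the consecutive pairs of p). *)
Definition multipath (E H : {set V * V}) : Prop :=
  H \subset E /\
  forall v : V, exists p : seq V,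
    [/\ uniq p, comp H v = [set x in p] &
        forall x y : V, x \in comp H v -> ((x, y) \in H) = ((x, y) \in zip p (behead p))].

Definition covers (E H H' : {set V * V}) : Prop :=
  multipath E H /\ multipath E H' /\ exists e, e \notin H /\ H' = e |: H.

Definition is_comp_min (H : {set V * V}) (w : V) : bool :=
  [forall u, connect (uadj H) w u ==> (w <= u)].

(* index i of the component c_i containing v, components ordered
   c_0 < c_1 < ... by their minimal vertices: the number of components whose
   minimal vertex is smaller than the minimal vertex of the component of v *)
Definition comp_index (H : {set V * V}) (v : V) : nat :=
  #|[set w : V | is_comp_min H w & [forall u, connect (uadj H) v u ==> (w < u)]]|.

(* sigma_e(H, H u e), with values in Z_2 = bool (true = 1) *)
Definition sigma_e (H H' : {set V * V}) : bool :=
  match [pick e in H' :\: H] with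
  | Some e =>
      let s := comp_index H e.1 in
      let t := comp_index H e.2 in
      if s < t then odd t.+1 else odd s
  | None => false
  end.

End PathPoset.

(* sign assignment on a poset (elements satisfying P, covering relation cov),
   Z_2 values as bool with addition addb *)
Definition is_sign_assignment {X : Type} (P : X -> Prop) (cov : X -> X -> Prop)
  (eps : X -> X -> bool) : Prop :=
  forall x y y' z, P x -> P y -> P y' -> P z ->
    cov x y -> cov y z -> cov x y' -> cov y' z -> y <> y' ->
    addb (eps x y) (eps y z) = ~~ addb (eps x y') (eps y' z).

(* Main.v *)
Require Import Defs.
From mathcomp Require Import all_boot all_order.
From mathcomp Require Import zify.
Set Implicit Arguments. Unset Strict Implicit. Unset Printing Implicit Defensive.
Import Order.TTheory.
Open Scope order_scope.


Section S.
Context {d : Order.disp_t} {V : finOrderType d}.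
Implicit Types (H : {set V * V}) (u v w x : V).

Lemma uadj_sym H : symmetric (uadj H).
Proof. by move=> x y; rewrite /uadj orbC. Qed.

Lemma csym H : connect_sym (uadj H).
Proof. exact/sym_connect_sym/uadj_sym. Qed.

Definition cmin H v : V := [arg min_(u < v | connect (uadj H) v u) u].

Lemma cmin_conn H v : connect (uadj H) v (cmin H v).
Proof. by rewrite /cmin; case: arg_minP. Qed.

Lemma cmin_le H v u : connect (uadj H) v u -> cmin H v <= u.
Proof. by rewrite /cmin; case: arg_minP => // i _ Hi /Hi. Qed.

Lemma cmin_uniq H v x : connect (uadj H) v x ->
  (forall u, connect (uadj H) v u -> x <= u) -> cmin H v = x.
Proof.
move=> vx Hx; apply/le_anti; rewrite cmin_le //=; exact: Hx (cmin_conn H v).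
Qed.

Lemma cmin_eq H v w : connect (uadj H) v w -> cmin H v = cmin H w.
Proof.
move=> vw; apply: cmin_uniq.
  by apply: connect_trans vw (cmin_conn H w).
move=> u vu; apply: cmin_le; rewrite csym in vw; exact: connect_trans vw vu.
Qed.

Lemma cmin_idem H v : cmin H (cmin H v) = cmin H v.
Proof. by rewrite -(cmin_eq (cmin_conn H v)). Qed.

Definition Fix H := [set w | cmin H w == w].
Definition N (F : {set V}) x := #|[set w in F | w < x]|.

Lemma is_comp_minE H w : is_comp_min H w = (cmin H w == w).
Proof.
apply/forallP/eqP => [h|h u].
  apply/le_anti; rewrite cmin_le //=; exact: (implyP (h _)) (cmin_conn H w).
by apply/implyP => wu; rewrite -h; exact: cmin_le.
Qed.

Lemma comp_indexE H v : comp_index H v = N (Fix H) (cmin H v).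
Proof.
rewrite /comp_index /N; apply: eq_card => w; rewrite !inE is_comp_minE.
congr (_ && _); apply/forallP/idP => [h|lt u].
  exact: (implyP (h _)) (cmin_conn H v).
by apply/implyP => /cmin_le; apply: lt_le_trans.
Qed.

End S.

Lemma path_inv (T : Type) (r : rel T) (P : pred T) :
  (forall x y, P x -> r x y -> P y) -> forall x p, P x -> path r x p -> P (last x p).
Proof. by move=> h x p; elim: p x => //= y p IH x Px /andP[xy /(IH y (h _ _ Px xy))]. Qed.

Section S.
Context {d : Order.disp_t} {V : finOrderType d}.
Implicit Types (H : {set V * V}) (u v w x : V).

Lemma conn_sub H a b u v : connect (uadj H) u v -> connect (uadj ((a, b) |: H)) u v.
Proof.
apply: connect_sub => x y xy; apply: connect1; move: xy.
by rewrite /uadj !in_setU1 => /orP[->|->]; rewrite !orbT.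
Qed.

Lemma conn_add H a b u v :
  connect (uadj ((a, b) |: H)) u v =
  [|| connect (uadj H) u v,
      connect (uadj H) u a && connect (uadj H) b v |
      connect (uadj H) u b && connect (uadj H) a v].
Proof.
set R := connect (uadj H).
have Rs : forall x y, R x y = R y x by move=> *; rewrite /R csym.
have Rt : transitive R by move=> ???; apply: connect_trans.
apply/idP/idP; last first.
  have ab : connect (uadj ((a, b) |: H)) a b.
    by apply: connect1; rewrite /uadj in_setU1 eqxx.
  case/or3P => [/conn_sub //|/andP[ua bv]|/andP[ub av]].
    by apply: connect_trans (conn_sub _ _ ua) (connect_trans ab (conn_sub _ _ bv)).
  apply: connect_trans (conn_sub _ _ ub) (connect_trans _ (conn_sub _ _ av)).
  by rewrite csym.
pose Q z := [|| R u z, R u a && R b z | R u b && R a z].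
suff inv : forall x y, Q x -> uadj ((a, b) |: H) x y -> Q y.
  move/connectP => [p pth ->]; apply: path_inv inv _ _ _ pth.
  by rewrite /Q /R connect0.
move=> x y Qx xy0.
have step : forall z, uadj H x y -> R z x -> R z y.
  by move=> z xy zx; apply: Rt zx (connect1 xy).
have step' : forall z, uadj H x y -> R x z -> R y z.
  by move=> z xy; rewrite Rs => /step -/(_ xy); rewrite Rs.
move: xy0 Qx; rewrite /Q /uadj !in_setU1 !xpair_eqE.
case/orP=> [/orP[/andP[/eqP-> /eqP->]|xyH]|/orP[/andP[/eqP-> /eqP->]|yxH]].
- have Rr z : R z z by exact: connect0.
  case/or3P=> [h|/andP[h _]|/andP[h _]]; apply/or3P.
  + by apply: Or32; rewrite h Rr.
  + by apply: Or32; rewrite h Rr.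
  + by apply: Or31.
- have xy : uadj H x y by rewrite /uadj xyH.
  case/or3P=> [h|/andP[h1 h2]|/andP[h1 h2]]; apply/or3P.
  + by apply: Or31; apply: step.
  + by apply: Or32; rewrite h1 (step _ xy h2).
  + by apply: Or33; rewrite h1 (step _ xy h2).
- have Rr z : R z z by exact: connect0.
  case/or3P=> [h|/andP[h _]|/andP[h _]]; apply/or3P.
  + by apply: Or33; rewrite h Rr.
  + by apply: Or31.
  + by apply: Or33; rewrite h Rr.
- have xy : uadj H x y by rewrite /uadj yxH orbT.
  case/or3P=> [h|/andP[h1 h2]|/andP[h1 h2]]; apply/or3P.
  + by apply: Or31; apply: step.
  + by apply: Or32; rewrite h1 (step _ xy h2).
  + by apply: Or33; rewrite h1 (step _ xy h2).
Qed.
End S.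

Lemma mem_zip1 (S T : eqType) (s : seq S) (t : seq T) x y :
  (x, y) \in zip s t -> x \in s.
Proof.
elim: s t => [|a s IH] [|b t] //=; rewrite !inE => /orP[/eqP[-> _]|/IH ->];
  by rewrite ?eqxx ?orbT.
Qed.

Section S.
Context {d : Order.disp_t} {V : finOrderType d}.
Implicit Types (H : {set V * V}) (u v w x : V).

Lemma count_edges H (C : {set V}) (p : seq V) :
  uniq p -> C = [set x in p] ->
  (forall x y, x \in C -> ((x, y) \in H) = ((x, y) \in zip p (behead p))) ->
  #|[set q in H | q.1 \in C]| = (#|C|).-1.
Proof.
move=> up defC hE.
have -> : [set q in H | q.1 \in C] = [set q in zip p (behead p)].
  apply/setP => -[x y]; rewrite !inE /=.
  case xC: (x \in C); first by rewrite andbT hE.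
  rewrite andbF; apply/esym; apply: negbTE; apply: contraFN xC => /mem_zip1.
  by rewrite defC inE.
rewrite cardsE; have /card_uniqP -> := zip_uniql (behead p) up.
rewrite defC cardsE; have /card_uniqP -> := up.
by rewrite size_zip size_behead; lia.
Qed.

Lemma not_conn E H a b :
  multipath E H -> multipath E ((a, b) |: H) -> (a, b) \notin H ->
  ~~ connect (uadj H) a b.
Proof.
move=> [_ mH] [_ mH'] abH; apply/negP => Rab.
have CE : Defs.comp ((a, b) |: H) a = Defs.comp H a.
  apply/setP => v; rewrite !inE conn_add connect0 /= Rab /=.
  case av: (connect (uadj H) a v) => //=.
rewrite orbF;   apply/negbTE; apply: contraFN av => bv; exact: connect_trans Rab bv.
case: (mH a) => p [up Cp Ep]; case: (mH' a) => p' [up' Cp' Ep'].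
have c1 := count_edges up Cp Ep.
have c2 := count_edges up' Cp' Ep'.
rewrite CE in c2.
have aC : a \in Defs.comp H a by rewrite inE connect0.
have : [set q in (a, b) |: H | q.1 \in Defs.comp H a] = (a, b) |: [set q in H | q.1 \in Defs.comp H a].
  apply/setP => -[x y]; rewrite !inE /= !xpair_eqE.
  by case: eqP => [->|] //=; rewrite connect0 andbT //; case: (y == b); rewrite ?andbT.

move=> e; rewrite e cardsU1 inE (negbTE abH) /= c1 in c2.
move/(congr1 (fun n => n - #|Defs.comp H a|.-1)): c2.
by rewrite addnK subnn.
Qed.
End S.

Section S.
Context {d : Order.disp_t} {V : finOrderType d}.
Implicit Types (u v w x : V).
Variables (H H' : {set V * V}) (a b : V).
Local Notation R := (connect (uadj H)).
Local Notation R' := (connect (uadj H')).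
Hypothesis hR' : forall u v, R' u v = [|| R u v, R u a && R b v | R u b && R a v].
Hypothesis nab : ~~ R a b.

Lemma Rsym u v : R u v = R v u. Proof. exact: csym. Qed.
Lemma Rtr u v w : R u v -> R v w -> R u w. Proof. exact: connect_trans. Qed.

Lemma cmin'_a w : R w a -> cmin H' w = Order.min (cmin H a) (cmin H b).
Proof.
move=> wa.
have wb : ~~ R w b by apply: contra nab => wb; rewrite Rsym in wa; exact: Rtr wa wb.
apply: cmin_uniq.
  rewrite minEle; case: ifP => _; rewrite hR'.
    by rewrite (Rtr wa (cmin_conn H a)).
  by rewrite wa cmin_conn orbT.
move=> u; rewrite hR' (negbTE wb) /= orbF ge_min => /orP[wu|/andP[_ bu]].
  by rewrite cmin_le // (Rtr _ wu) // Rsym.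
by rewrite (cmin_le bu) orbT.
Qed.

Lemma cmin'_n w : ~~ R w a -> ~~ R w b -> cmin H' w = cmin H w.
Proof.
move=> wa wb; apply: cmin_uniq; first by rewrite hR' cmin_conn.
by move=> u; rewrite hR' (negbTE wa) (negbTE wb) /= !orbF; exact: cmin_le.
Qed.

Lemma mAB : cmin H a != cmin H b.
Proof.
apply: contra nab => /eqP e; apply: Rtr (cmin_conn H a) _.
by rewrite e Rsym cmin_conn.
Qed.

Lemma fix'_a w : R w a ->
  (w \in Fix H') = (w \in Fix H) && (w != Order.max (cmin H a) (cmin H b)).
Proof.
move=> wa; rewrite !inE (cmin'_a wa) (cmin_eq wa).
have wb : ~~ R w b by apply: contra nab => wb; rewrite Rsym in wa; exact: Rtr wa wb.
have ne := mAB.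
case: (eqVneq (cmin H a) w) => [<-|ne2] /=.
  rewrite minEle maxEle; case: ifP => h; rewrite ?eqxx.
    by rewrite ne.
  by rewrite eq_sym (negbTE ne).
rewrite minEle; case: ifP => _; first exact/negbTE.
apply/negbTE; apply: contra wb => /eqP <-; rewrite Rsym; exact: cmin_conn.
Qed.

Lemma fix'_n w : ~~ R w a -> ~~ R w b ->
  (w \in Fix H') = (w \in Fix H) && (w != Order.max (cmin H a) (cmin H b)).
Proof.
move=> wa wb; rewrite !inE (cmin'_n wa wb).
case: eqP => //= e; rewrite maxEle; case: ifP => _.
  apply/esym; apply: contra wb => /eqP ->; rewrite Rsym; exact: cmin_conn.
apply/esym; apply: contra wa => /eqP ->; rewrite Rsym; exact: cmin_conn.
Qed.

End S.

Definition g (a b j : nat) : nat :=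
  if j == maxn a b then minn a b else if (j < maxn a b)%N then j else j.-1.

Lemma g_l a b : a != b -> g a b a = minn a b.
Proof. rewrite /g => ab; case: ifP => ? //; case: ifP => ?; lia. Qed.
Lemma g_r a b : a != b -> g a b b = minn a b.
Proof. rewrite /g => ab; case: ifP => ? //; case: ifP => ?; lia. Qed.
Lemma g_lt a b j : (j < maxn a b)%N -> g a b j = j.
Proof. rewrite /g => h; rewrite h; case: ifP => ?; lia. Qed.
Lemma g_gt a b j : (maxn a b < j)%N -> g a b j = j.-1.
Proof. rewrite /g => h; case: ifP => ?; try lia; case: ifP => ?; lia. Qed.

Section S.
Context {d : Order.disp_t} {V : finOrderType d}.
Implicit Types (u v w x y : V) (F : {set V}).

Lemma N_mono F x y : x <= y -> (N F x <= N F y)%N.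
Proof.
move=> xy; apply: subset_leq_card; apply/subsetP => w; rewrite !inE.
by case/andP => -> wx; exact: lt_le_trans wx xy.
Qed.

Lemma N_strict F x y : x \in F -> x < y -> (N F x < N F y)%N.
Proof.
move=> xF xy; apply: proper_card; apply/properP; split.
  apply/subsetP => w; rewrite !inE.
  by case/andP => -> wx; exact: lt_trans wx xy.
by exists x; rewrite !inE ?xF ?xy ?ltxx ?andbF.
Qed.

Lemma N_del F M x : M \in F -> N (F :\ M) x = (N F x - (M < x)%O)%N.
Proof.
move=> MF; rewrite /N; case: (boolP (M < x)) => Mx.
  have -> : [set w in F | w < x] = M |: [set w in F :\ M | w < x].
    apply/setP => w; rewrite !inE; case: eqP => [->|] //=; by rewrite MF Mx.
  by rewrite cardsU1 !inE eqxx /= add1n subn1.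
rewrite subn0; apply: eq_card => w; rewrite !inE.
case: eqP => [->|] //=; by rewrite (negbTE Mx) andbF.
Qed.

End S.

Section S.
Context {d : Order.disp_t} {V : finOrderType d}.

Lemma idx_merge (E H : {set V * V}) a b :
  multipath E H -> multipath E ((a, b) |: H) -> (a, b) \notin H ->
  comp_index H a != comp_index H b /\
  forall v, comp_index ((a, b) |: H) v =
            g (comp_index H a) (comp_index H b) (comp_index H v).
Proof.
move=> mH mH' abH.
have nab := not_conn mH mH' abH.
set H' := (a, b) |: H.
have hR' : forall u v, connect (uadj H') u v =
  [|| connect (uadj H) u v, connect (uadj H) u a && connect (uadj H) b v
    | connect (uadj H) u b && connect (uadj H) a v] by move=> u v; exact: conn_add.
have hR'' : forall u v, connect (uadj H') u v =
  [|| connect (uadj H) u v, connect (uadj H) u b && connect (uadj H) a v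
    | connect (uadj H) u a && connect (uadj H) b v].
  by move=> u v; rewrite hR'; case: (connect _ u v); case: (_ && _); case: (_ && _).
have nba : ~~ connect (uadj H) b a by rewrite csym.
set mA := cmin H a; set mB := cmin H b.
set M := Order.max mA mB; set m := Order.min mA mB.
set F := Fix H.
have FE : Fix H' = F :\ M.
  apply/setP => w; rewrite in_setD1 andbC.
  case: (boolP (connect (uadj H) w a)) => wa; first by rewrite (fix'_a hR' nab wa).
  case: (boolP (connect (uadj H) w b)) => wb.
    by rewrite (fix'_a hR'' nba wb) /M maxC.
  by rewrite (fix'_n hR' wa wb).
have AF : mA \in F by rewrite inE cmin_idem.
have BF : mB \in F by rewrite inE cmin_idem.
have ne : mA != mB := mAB nab.
have [NAB Nmax Nmin] : [/\ N F mA != N F mB, maxn (N F mA) (N F mB) = N F M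
                            & minn (N F mA) (N F mB) = N F m].
  rewrite /M /m maxEle minEle.
  case/orP: (lt_total ne) => lt.
    have := N_strict AF lt; rewrite (ltW lt); split; lia.
  have := N_strict BF lt; rewrite leNgt lt /=; split; lia.
have MF : M \in F by rewrite /M maxEle; case: ifP.
have mM : m <= M by rewrite /m /M ge_min !le_max lexx.
rewrite !comp_indexE; split => // v.
rewrite !comp_indexE FE -/F -/mA -/mB.
case: (boolP (connect (uadj H) v a)) => va.
  rewrite (cmin'_a hR' nab va) -/m (cmin_eq va) -/mA g_l // N_del //. 
  by rewrite ltNge mM subn0 -Nmin.
case: (boolP (connect (uadj H) v b)) => vb.
  rewrite (cmin'_a hR'' nba vb) minC -/m (cmin_eq vb) -/mB g_r // N_del //.
  by rewrite ltNge mM subn0 -Nmin.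
rewrite (cmin'_n hR' va vb) N_del //.
have xF : cmin H v \in F by rewrite inE cmin_idem.
have xM : cmin H v != M.
  rewrite /M maxEle; case: ifP => _.
    apply: contra vb => /eqP e; apply: connect_trans (cmin_conn H v) _.
    by rewrite e csym cmin_conn.
  apply: contra va => /eqP e; apply: connect_trans (cmin_conn H v) _.
  by rewrite e csym cmin_conn.
case/orP: (lt_total xM) => lt.
  rewrite g_lt; last by rewrite Nmax; exact: N_strict.
  by rewrite ltNge (ltW lt) subn0.
rewrite g_gt; last by rewrite Nmax; exact: N_strict.
by rewrite lt subn1.
Qed.

End S.
Close Scope order_scope.

Definition f (s t : nat) : bool := if s < t then odd t.+1 else odd s.

Lemma g_spec a b j : a != b ->
  [\/ g a b j = minn a b /\ j = maxn a b,
      g a b j = j /\ j < maxn a b | g a b j = j.-1 /\ maxn a b < j].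
Proof.
rewrite /g => ab; case: ifP => /eqP h; first by apply: Or31.
case: ifP => h2; [apply: Or32 | apply: Or33]; lia.
Qed.

Lemma f_spec s t : (s < t /\ f s t = odd t.+1) \/ (t <= s /\ f s t = odd s).
Proof. rewrite /f; case: ltnP; [left|right]; by []. Qed.

Lemma odd_eq m n : m %% 2 = n %% 2 -> odd m = odd n.
Proof. by rewrite !modn2; case: odd; case: odd. Qed.

Lemma arith a1 b1 a2 b2 : a1 != b1 -> a2 != b2 ->
  g a1 b1 a2 != g a1 b1 b2 -> g a2 b2 a1 != g a2 b2 b1 ->
  addb (f a1 b1) (f (g a1 b1 a2) (g a1 b1 b2)) =
  ~~ addb (f a2 b2) (f (g a2 b2 a1) (g a2 b2 b1)).
Proof.
move=> h1 h2 h3 h4.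

case: (g_spec a2 h1) => -[e1 c1]; rewrite e1 in h3 *;
case: (g_spec b2 h1) => -[e2 c2]; rewrite e2 in h3 *; try (exfalso; lia);
case: (g_spec a1 h2) => -[e3 c3]; rewrite e3 in h4 *; try (exfalso; lia);
case: (g_spec b1 h2) => -[e4 c4]; rewrite e4 in h4 *; try (exfalso; lia);
case: (f_spec a1 b1) => -[c5 ->];
case: (f_spec a2 b2) => -[c6 ->]; try (exfalso; lia);
try match goal with |- context [f ?x ?y] => case: (f_spec x y) => -[c7 ->] end; try (exfalso; lia);
try match goal with |- context [f ?x ?y] => case: (f_spec x y) => -[c8 ->] end; try (exfalso; lia);
rewrite -!oddD -oddS; apply: odd_eq; lia.
Qed.

Lemma sigma_add d (V : finOrderType d) (H : {set V * V}) a b : (a, b) \notin H ->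
  sigma_e H ((a, b) |: H) = f (comp_index H a) (comp_index H b).
Proof.
move=> abH; rewrite /sigma_e.
rewrite (_ : _ :\: _ = [set (a, b)]); last first.
  apply/setP => q; rewrite !inE; case: eqP => [->|_] /=; [by rewrite abH | by case: (q \in H)].
case: pickP => [q|/(_ (a, b))]; rewrite inE ?eqxx //= => /eqP -> //.
Qed.

Theorem lemma4p5 (d : Order.disp_t) (V : finOrderType d) (E : {set V * V}) :
  loopless E ->
  is_sign_assignment (multipath E) (covers E) (@sigma_e d V).
Proof.
move=> _ x y y' z mx my my' mz [_ [_ [e1 [e1x ye]]]] [_ [_ [e1' [e1y ze]]]]
  [_ [_ [e2 [e2x y'e]]]] [_ [_ [e2' [e2y' ze']]]] yy'.
have ne12 : e1 != e2 by apply/eqP => e; apply: yy'; rewrite ye y'e e.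
have e2y : e2 \notin y by rewrite ye in_setU1 negb_or eq_sym ne12 e2x.
have e1y' : e1 \notin y' by rewrite y'e in_setU1 negb_or ne12 e1x.
have E1 : e1' = e2.
  have : e2 \in z by rewrite ze' y'e !in_setU1 eqxx orbT.
  by rewrite ze in_setU1 => /orP[/eqP -> //|h]; rewrite h in e2y.
have E2 : e2' = e1.
  have : e1 \in z by rewrite ze ye !in_setU1 eqxx orbT.
  by rewrite ze' in_setU1 => /orP[/eqP -> //|h]; rewrite h in e1y'.
subst e1' e2'.
rewrite {1}ze ze'.
have mz1 : multipath E (e2 |: y) by rewrite -ze.
have mz2 : multipath E (e1 |: y') by rewrite -ze'.
subst y y'.
destruct e1 as [a1 b1], e2 as [a2 b2].
rewrite !sigma_add //.
have [n1 g1] := idx_merge mx my e1x.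
have [n2 g2] := idx_merge mx my' e2x.
have [n3 _] := idx_merge my mz1 e2y.
have [n4 _] := idx_merge my' mz2 e1y'.
rewrite !g1 in n3 *; rewrite !g2 in n4 *.
exact: arith.
Qed.
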